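(* Let $\mathcal X\subseteq[-1,1]^n$ and let $f:\mathcal X\to\{\pm1\}$ be a $(K,M)$-PTF. Then $f$ is a $(K,2M,B,\xi)$-PTF for $\xi=\frac1{2(n+1)^{\frac{K+1}2}KM}$ and $B=2(n+1)^{K/2}M$.
   Context: $\|p\|_{\mathrm{co}}$ denotes the Euclidean norm of the coefficient vector of a polynomial $p$. $f:\mathcal X\to\{\pm1\}$ is a $(K,M)$-PTF if there is a polynomial $p:\mathbb R^n\to\mathbb R$ of degree $\le K$ with $\|p\|_{\mathrm{co}}\le M$ and $p(\mathbf x)f(\mathbf x)\ge1$ for all $\mathbf x\in\mathcal X$. With $\mathcal B_r(\mathbf x)=\{\tilde{\mathbf x}\in[-1,1]^n:\|\mathbf x-\tilde{\mathbf x}\|_\infty\le r\}$, $f$ is a $(K,M,B,\xi)$-PTF if there is such a polynomial $p$ (degree $\le K$, $\|p\|_{\mathrm{co}}\le M$) with $B\ge p(\tilde{\mathbf x})f(\mathbf x)\ge1$ for all $\mathbf x\in\mathcal X$ and $\tilde{\mathbf x}\in\mathcal B_\xi(\mathbf x)$. *)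

(* Defs.v *)
From mathcomp Require Import all_boot all_order all_algebra.
From mathcomp Require Import mpoly.
Set Implicit Arguments. Unset Strict Implicit. Unset Printing Implicit Defensive.
Import Order.TTheory GRing.Theory Num.Theory.
Local Open Scope ring_scope.

Definition conorm (R : rcfType) (n : nat) (p : {mpoly R[n]}) : R :=
  Num.sqrt (\sum_(m <- msupp p) (p@_m) ^+ 2).

(* degree of p is at most K  (msize p = 1 + deg p, and 0 for p = 0) *)
Definition deg_le (R : rcfType) (n : nat) (p : {mpoly R[n]}) (K : nat) : Prop :=
  (msize p <= K.+1)%N.

Definition in_cube (R : rcfType) (n : nat) (x : 'I_n -> R) : Prop :=
  forall i, -1 <= x i <= 1.

Definition ball_inf (R : rcfType) (n : nat) (r : R) (x xt : 'I_n -> R) : Prop :=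
  in_cube xt /\ forall i, `|x i - xt i| <= r.

Definition PTF (R : rcfType) (n : nat) (X : ('I_n -> R) -> Prop)
    (f : ('I_n -> R) -> R) (K : nat) (M : R) : Prop :=
  exists p : {mpoly R[n]},
    deg_le p K /\ conorm p <= M /\
    forall x, X x -> 1 <= p.@[x] * f x.

Definition robust_PTF (R : rcfType) (n : nat) (X : ('I_n -> R) -> Prop)
    (f : ('I_n -> R) -> R) (K : nat) (M B xi : R) : Prop :=
  exists p : {mpoly R[n]},
    deg_le p K /\ conorm p <= M /\
    forall x xt, X x -> ball_inf xi x xt ->
      1 <= p.@[xt] * f x /\ p.@[xt] * f x <= B.

(* Main.v *)
Require Import Defs.
From mathcomp Require Import all_boot all_order all_algebra.
From mathcomp Require Import mpoly.
From mathcomp Require Import ring lra.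
Set Implicit Arguments. Unset Strict Implicit. Unset Printing Implicit Defensive.
Import Order.TTheory GRing.Theory Num.Theory.
Local Open Scope ring_scope.

Lemma prod_diff (R : realDomainType) (I : Type) (r : seq I) (a b : I -> R) :
  (forall i, `|a i| <= 1) -> (forall i, `|b i| <= 1) ->
  `|\prod_(i <- r) a i| <= 1 /\ `|\prod_(i <- r) b i| <= 1 /\
  `|\prod_(i <- r) a i - \prod_(i <- r) b i| <= \sum_(i <- r) `|a i - b i|.
Proof.
move=> ha hb; elim: r => [|i r [hA [hB hD]]]; first by rewrite !big_nil subrr normr0 normr1.
rewrite !big_cons; split; [|split].
- rewrite normrM; have := ha i; have := normr_ge0 (a i); have := normr_ge0 (\prod_(j <- r) a j); nra.
- rewrite normrM; have := hb i; have := normr_ge0 (b i); have := normr_ge0 (\prod_(j <- r) b j); nra.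
have -> : a i * \prod_(j <- r) a j - b i * \prod_(j <- r) b j =
  (a i - b i) * \prod_(j <- r) a j + b i * (\prod_(j <- r) a j - \prod_(j <- r) b j) by ring.
apply: (le_trans (ler_normD _ _)); rewrite !normrM.
have := hb i; have := normr_ge0 (b i); have := normr_ge0 (a i - b i);
have := normr_ge0 (\prod_(j <- r) a j - \prod_(j <- r) b j);
have := normr_ge0 (\prod_(j <- r) a j); nra.
Qed.

Lemma pow_diff (R : realDomainType) (x y : R) (k : nat) :
  `|x| <= 1 -> `|y| <= 1 -> `|x ^+ k - y ^+ k| <= k%:R * `|x - y|.
Proof.
move=> hx hy.
have -> : x ^+ k = \prod_(j < k) x by rewrite prodr_const card_ord.
have -> : y ^+ k = \prod_(j < k) y by rewrite prodr_const card_ord.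
have [_ [_ H]] := @prod_diff R _ (index_enum 'I_k) (fun=> x) (fun=> y) (fun=> hx) (fun=> hy).
by apply: (le_trans H); rewrite sumr_const card_ord mulr_natl.
Qed.

Lemma sum_const_seq (R : ringType) (I : Type) (r : seq I) (c : R) :
  \sum_(i <- r) c = (size r)%:R * c.
Proof. elim: r => [|i r IH]; first by rewrite big_nil mul0r.
by rewrite big_cons IH /= -addn1 natrD mulrDl mul1r addrC. Qed.

Lemma cs_sum (R : realFieldType) (I : Type) (r : seq I) (a : I -> R) :
  (\sum_(i <- r) a i) ^+ 2 <= (size r)%:R * \sum_(i <- r) a i ^+ 2.
Proof.
have E : (\sum_(i <- r) a i) ^+ 2 = \sum_(i <- r) \sum_(j <- r) a i * a j.
  by rewrite expr2 mulr_suml; apply: eq_bigr => i _; rewrite mulr_sumr.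
rewrite E.
apply: (le_trans (y := \sum_(i <- r) \sum_(j <- r) (a i ^+ 2 + a j ^+ 2) / 2)).
  apply: ler_sum => i _; apply: ler_sum => j _.
  have := sqr_ge0 (a i - a j); rewrite !expr2; nra.
under eq_bigr => i _ do rewrite -big_distrl big_split /= sum_const_seq.
rewrite -big_distrl big_split /= -mulr_sumr sum_const_seq.
set N := (size r)%:R; set Q := \sum_(i <- r) _.
rewrite le_eqVlt; apply/orP; left; apply/eqP; by field.
Qed.

Definition phi (n : nat) (s : seq 'I_n.+1) : 'X_{1..n} :=
  [multinom count_mem (widen_ord (leqnSn n) i) s | i < n].

Lemma phi_surj (n K : nat) (m : 'X_{1..n}) :
  (mdeg m <= K)%N -> exists s : seq 'I_n.+1, size s = K /\ phi s = m.
Proof.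
elim: K m => [|K IH] m hm.
  have /eqP -> : m == 0%MM by rewrite -mdeg_eq0 -leqn0.
  by exists [::]; split => //; apply/mnmP => i; rewrite mnmE mnm0E.
case: (leqP (mdeg m) K) => hK.
  have [s [hs hp]] := IH m hK.
  exists (ord_max :: s); split; first by rewrite /= hs.
  apply/mnmP => i; rewrite -hp !mnmE /=.
  have -> : (ord_max == widen_ord (leqnSn n) i) = false.
    by apply/negbTE; rewrite -val_eqE /= neq_ltn ltn_ord orbT.
  by [].
have hmK : mdeg m = K.+1 by apply/eqP; rewrite eqn_leq hm hK.
have [i hi] : exists i : 'I_n, (0 < m i)%N.
  case: (boolP [exists i : 'I_n, 0 < m i]%N) => [/existsP // | /existsPn H].
  exfalso; move: hmK; rewrite mdegE big1 // => j _.
  by apply/eqP; rewrite -leqn0 leqNgt H.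
pose m' := [multinom (m j - (i == j))%N | j < n].
have Em : m = (m' + U_(i))%MM.
  apply/mnmP => j; rewrite mnmDE mnm1E mnmE.
  case: eqP => [<-|_]; last by rewrite subn0 addn0.
  by rewrite subnK.
have hm' : (mdeg m' <= K)%N by move: hmK; rewrite Em mdegD mdeg1 addn1 => -[->].
have [s [hs hp]] := IH m' hm'.
exists (widen_ord (leqnSn n) i :: s); split; first by rewrite /= hs.
rewrite Em -hp; apply/mnmP => j; rewrite mnmDE mnm1E !mnmE /= addnC.
by [].
Qed.

Lemma card_supp (R : rcfType) (n K : nat) (p : {mpoly R[n]}) :
  deg_le p K -> (size (msupp p) <= (n.+1) ^ K)%N.
Proof.
move=> hd.
pose L := [seq phi (val t) | t <- enum {: K.-tuple 'I_n.+1}].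
have -> : ((n.+1) ^ K = size L)%N by rewrite size_map -cardE card_tuple card_ord.
apply: uniq_leq_size; first exact: msupp_uniq.
move=> m hm.
have hdm : (mdeg m <= K)%N.
  have := msize_mdeg_lt hm; rewrite /deg_le in hd => h.
  by rewrite -ltnS; apply: leq_trans h hd.
have [s [hs hp]] := phi_surj hdm.
have hs' : size s == K by rewrite hs.
rewrite -hp; apply/mapP; exists (Tuple hs'); first by rewrite mem_enum.
by [].
Qed.

Lemma cube_norm (R : rcfType) n (x : 'I_n -> R) i : in_cube x -> `|x i| <= 1.
Proof. by move=> h; rewrite ler_norml h. Qed.

Lemma mono_bound (R : rcfType) n (y : 'I_n -> R) (m : 'X_{1..n}) :
  in_cube y -> `|\prod_i y i ^+ m i| <= 1.
Proof.
move=> hy; rewrite normr_prod; apply: prodr_ile1 => i _; rewrite normr_ge0 /=.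
by rewrite normrX; apply: exprn_ile1 => //; exact: cube_norm.
Qed.

Lemma mono_diff (R : rcfType) n (x y : 'I_n -> R) (m : 'X_{1..n}) (xi : R) :
  in_cube x -> in_cube y -> (forall i, `|x i - y i| <= xi) ->
  `|\prod_i x i ^+ m i - \prod_i y i ^+ m i| <= (mdeg m)%:R * xi.
Proof.
move=> hx hy hxy.
have ha : forall i, `|x i ^+ m i| <= 1.
  by move=> i; rewrite normrX; apply: exprn_ile1 => //; exact: cube_norm.
have hb : forall i, `|y i ^+ m i| <= 1.
  by move=> i; rewrite normrX; apply: exprn_ile1 => //; exact: cube_norm.
have [_ [_ H]] := prod_diff (index_enum 'I_n) ha hb.
apply: (le_trans H); rewrite mdegE natr_sum mulr_suml; apply: ler_sum => i _.
apply: (le_trans (pow_diff _ (cube_norm i hx) (cube_norm i hy))).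
by apply: ler_wpM2l => //; exact: ler0n.
Qed.

Lemma final_step (R : realFieldType) (u v t S aM fx : R) :
  fx = 1 \/ fx = -1 -> 1 <= v * fx -> -t <= u - v -> u - v <= t -> t <= 1/2 ->
  -S <= u -> u <= S -> S <= aM -> 1 <= 2 * u * fx /\ 2 * u * fx <= 2 * aM.
Proof. by case=> -> *; split; lra. Qed.

Theorem lemma14 (R : rcfType) (n K : nat) (M : R)
    (X : ('I_n -> R) -> Prop) (f : ('I_n -> R) -> R) :
  (forall x, X x -> in_cube x) ->
  (forall x, X x -> f x = 1 \/ f x = -1) ->
  PTF X f K M ->
  robust_PTF X f K (2 * M)
    (2 * Num.sqrt ((n.+1)%:R ^+ K) * M)
    (1 / (2 * Num.sqrt ((n.+1)%:R ^+ K.+1) * K%:R * M)).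
Proof.
move=> hX hf [p [hd [hc hp]]].
have hM : 0 <= M by apply: le_trans hc; exact: sqrtr_ge0.
set a := Num.sqrt ((n.+1)%:R ^+ K).
set b := Num.sqrt ((n.+1)%:R ^+ K.+1).
set xi := 1 / (2 * b * K%:R * M).
set S := \sum_(m <- msupp p) `|p@_m|.
have hS0 : 0 <= S by apply: sumr_ge0 => m _; exact: normr_ge0.
have ha0 : 0 <= a by exact: sqrtr_ge0.
have hS : S <= a * M.
  have -> : S = Num.sqrt (S ^+ 2) by rewrite sqrtr_sqr ger0_norm.
  apply: (le_trans (y := Num.sqrt ((size (msupp p))%:R * \sum_(m <- msupp p) p@_m ^+ 2))).
    rewrite ler_sqrt; last by apply: mulr_ge0; [exact: ler0n | apply: sumr_ge0 => m _; exact: sqr_ge0].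
    apply: (le_trans (cs_sum _ _)); apply: ler_wpM2l; first exact: ler0n.
    by rewrite le_eqVlt; apply/orP; left; apply/eqP; apply: eq_bigr => m _; rewrite -normrX ger0_norm // sqr_ge0.
  rewrite sqrtrM; last exact: ler0n.
  apply: ler_pM; [exact: sqrtr_ge0 | exact: sqrtr_ge0 | | exact: hc].
  rewrite ler_sqrt; last by apply: exprn_ge0; exact: ler0n.
  by rewrite -natrX ler_nat; exact: card_supp.
have hb : b = a * Num.sqrt (n.+1)%:R.
  by rewrite /b exprS mulrC sqrtrM //; apply: exprn_ge0; exact: ler0n.
have hs1 : 1 <= Num.sqrt (n.+1)%:R :> R.
  have : Num.sqrt 1 <= Num.sqrt (n.+1)%:R :> R by rewrite ler_sqrt // ler1n.
  by rewrite sqrtr1.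
have hxi0 : 0 <= xi.
  rewrite /xi; apply: divr_ge0 => //; apply: mulr_ge0 => //; apply: mulr_ge0; last exact: ler0n.
  by apply: mulr_ge0 => //; exact: sqrtr_ge0.
have hkey : K%:R * xi * S <= 1 / 2.
  have [hz|hnz] := eqVneq (K%:R * M) 0.
    have -> : xi = 0 by rewrite /xi -(mulrA (2 * b)) hz mulr0 invr0 mulr0.
    by rewrite mulr0 mul0r; lra.
  have hK0 : K%:R != 0 :> R by apply: contra hnz => /eqP ->; rewrite mul0r.
  have hM0 : M != 0 by apply: contra hnz => /eqP ->; rewrite mulr0.
  have hKxi : 0 <= K%:R * xi by apply: mulr_ge0 => //; exact: ler0n.
  apply: (le_trans (y := K%:R * xi * (a * M))); first exact: ler_wpM2l.
  have hapos : 0 < a by rewrite sqrtr_gt0 exprn_gt0 // ltr0n.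
  have ha0' : a != 0 by rewrite gt_eqF.
  have hs0 : Num.sqrt (n.+1)%:R != 0 :> R by apply: contraTN hs1 => /eqP ->; rewrite ler10.
  have -> : K%:R * xi * (a * M) = 1 / (2 * Num.sqrt (n.+1)%:R).
    by rewrite /xi hb; field; rewrite ?hK0 ?hM0 ?ha0' ?hs0.
  rewrite ler_pdivrMr; last lra.
  set s := Num.sqrt _ in hs1 *; lra.
exists (2 *: p); split; [|split].
- rewrite /deg_le; exact: leq_trans (msizeZ_le _ _) hd.
- have h2 : (2 : R) != 0 by rewrite pnatr_eq0.
  rewrite /conorm (perm_big _ (msuppZ _ h2)) /=.
  under eq_bigr => m _ do rewrite mcoeffZ exprMn.
  rewrite -mulr_sumr sqrtrM; last by apply: exprn_ge0.
  by rewrite sqrtr_sqr ger0_norm // ler_wpM2l.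
move=> x xt hx [hxt hball].
have hdiff : `|p.@[xt] - p.@[x]| <= K%:R * xi * S.
  rewrite !mevalE -sumrB; apply: (le_trans (ler_norm_sum _ _ _)).
  rewrite /S mulr_sumr !big_seq; apply: ler_sum => m hm.
  rewrite -mulrBr normrM mulrC; apply: ler_wpM2r; first exact: normr_ge0.
  rewrite distrC; apply: (le_trans (mono_diff m (hX x hx) hxt hball)).
  apply: ler_wpM2r => //; rewrite ler_nat.
  have := msize_mdeg_lt hm; rewrite /deg_le in hd => h.
  rewrite -ltnS; exact: leq_trans h hd.
have hbd : `|p.@[xt]| <= S.
  rewrite mevalE; apply: (le_trans (ler_norm_sum _ _ _)); apply: ler_sum => m _.
  rewrite normrM; rewrite -[leRHS]mulr1; apply: ler_wpM2l; first exact: normr_ge0.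
  exact: mono_bound.
have h1 := hp x hx.
rewrite mevalZ -[2 * a * M]mulrA.
move: hdiff hbd; rewrite !ler_norml => /andP [hd1 hd2] /andP [hb1 hb2].
exact: (final_step (hf x hx) h1 hd1 hd2 hkey hb1 hb2 hS).
Qed.
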